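(* Let $d\geq 2$ and let $\mathcal{H}_1,\mathcal{H}_2,\mathcal{H}_3,\mathcal{H}_4$ each be $\mathbb{C}^d$, with Alice holding $\mathcal{H}_A=\mathcal{H}_1\otimes\mathcal{H}_3$ and Bob holding $\mathcal{H}_B=\mathcal{H}_2\otimes\mathcal{H}_4$. For real $\epsilon,\delta$ let $$\rho=\mathbb{1}_{12}\otimes\mathbb{1}_{34}+\frac{\epsilon d-1}{d}\left(\mathbb{1}_{12}\otimes F_{34}+F_{12}\otimes\mathbb{1}_{34}\right)+\frac{1-2\epsilon d+\delta d^2}{d^2}F_{12}\otimes F_{34},$$ and assume $\rho$ is positive semidefinite. If either $$\Bigl(1-\frac{2}{d}\Bigr)^2+\min(4\epsilon,0)+\min(2\delta,0)\geq 0$$ or $$d^2+\min\bigl(4d(\epsilon d-1),0\bigr)+\min\bigl(2(\delta d^2-1),0\bigr)\geq 0,$$ then $\rho$ is 1-undistillable, i.e. $\langle\psi|\rho^{T_B}|\psi\rangle\geq 0$ for every vector $|\psi\rangle\in\mathcal{H}_A\otimes\mathcal{H}_B$ of Schmidt rank at most $2$ with respect to the split $A|B$.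
   Context: $F_{ij}$ denotes the swap operator $\sum_{k,l}|kl\rangle\langle lk|$ exchanging $\mathcal{H}_i$ and $\mathcal{H}_j$, and $\mathbb{1}_{ij}$ the identity on $\mathcal{H}_i\otimes\mathcal{H}_j$. $\rho^{T_B}$ denotes the partial transpose with respect to Bob's system $\mathcal{H}_2\otimes\mathcal{H}_4$ in the computational basis. *)

(* Defs.v *)
From HB Require Import structures.
From mathcomp Require Import all_boot all_order all_algebra.
From mathcomp Require Import complex.
Set Implicit Arguments. Unset Strict Implicit. Unset Printing Implicit Defensive.
Import Order.TTheory GRing.Theory Num.Theory.
Local Open Scope ring_scope.

(* Index of the 4-partite space H1 (x) H2 (x) H3 (x) H4, each C^d:
   a basis vector |k1 k2 k3 k4> is the tuple (k1, k2, k3, k4). *)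
Definition idx4 (d : nat) : finType := ('I_d * 'I_d * 'I_d * 'I_d)%type.
Definition i1 {d} (k : idx4 d) : 'I_d := k.1.1.1.
Definition i2 {d} (k : idx4 d) : 'I_d := k.1.1.2.
Definition i3 {d} (k : idx4 d) : 'I_d := k.1.2.
Definition i4 {d} (k : idx4 d) : 'I_d := k.2.

(* operators on H1 (x) H2 (x) H3 (x) H4 given by their matrix entries
   <k| X |l>, and vectors given by their coordinates *)
Definition op4 (C : Type) (d : nat) := idx4 d -> idx4 d -> C.
Definition vec4 (C : Type) (d : nat) := idx4 d -> C.

Definition delta (C : nzRingType) (n : nat) (a b : 'I_n) : C :=
  (a == b)%:R.

Section Ops.
Variables (C : numClosedFieldType) (d : nat).

Definition op_II : op4 C d := fun k l =>
  delta C (i1 k) (i1 l) * delta C (i2 k) (i2 l) *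
  delta C (i3 k) (i3 l) * delta C (i4 k) (i4 l).
(* 1_12 (x) F_34, with F_34 = sum |ab><ba| on H3 (x) H4 *)
Definition op_IF : op4 C d := fun k l =>
  delta C (i1 k) (i1 l) * delta C (i2 k) (i2 l) *
  delta C (i3 k) (i4 l) * delta C (i4 k) (i3 l).
Definition op_FI : op4 C d := fun k l =>
  delta C (i1 k) (i2 l) * delta C (i2 k) (i1 l) *
  delta C (i3 k) (i3 l) * delta C (i4 k) (i4 l).
Definition op_FF : op4 C d := fun k l =>
  delta C (i1 k) (i2 l) * delta C (i2 k) (i1 l) *
  delta C (i3 k) (i4 l) * delta C (i4 k) (i3 l).

Definition qform (X : op4 C d) (psi : vec4 C d) : C :=
  \sum_(k : idx4 d) \sum_(l : idx4 d) (psi k)^* * X k l * psi l.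

Definition psd (X : op4 C d) : Prop := forall psi : vec4 C d, 0 <= qform X psi.

(* partial transpose on Bob's system H2 (x) H4 in the computational basis:
   <k1 k2 k3 k4| X^{T_B} |l1 l2 l3 l4> = <k1 l2 k3 l4| X |l1 k2 l3 k4> *)
Definition ptB (X : op4 C d) : op4 C d := fun k l =>
  X (i1 k, i2 l, i3 k, i4 l) (i1 l, i2 k, i3 l, i4 k).

(* Schmidt rank at most n w.r.t. the split A = H1 (x) H3 | B = H2 (x) H4:
   psi = sum_{r<n} a_r (x) b_r with a_r in H_A, b_r in H_B *)
Definition schmidt_rank_le (n : nat) (psi : vec4 C d) : Prop :=
  exists (a : 'I_n -> 'I_d -> 'I_d -> C) (b : 'I_n -> 'I_d -> 'I_d -> C),
    forall k : idx4 d,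
      psi k = \sum_(r < n) a r (i1 k) (i3 k) * b r (i2 k) (i4 k).

Definition one_undistillable (X : op4 C d) : Prop :=
  forall psi : vec4 C d, schmidt_rank_le 2 psi -> 0 <= qform (ptB X) psi.
End Ops.

Local Open Scope complex_scope.
Definition rho (R : rcfType) (d : nat) (eps del : R) : op4 R[i] d :=
  let dR : R := d%:R in
  fun k l =>
    @op_II R[i] d k l
    + ((eps * dR - 1) / dR)%:C * (@op_IF R[i] d k l + @op_FI R[i] d k l)
    + ((1 - 2 * eps * dR + del * dR ^+ 2) / dR ^+ 2)%:C * @op_FF R[i] d k l.

(* Main.v *)
Require Import Defs.
From HB Require Import structures.
From mathcomp Require Import all_boot all_order all_algebra.
From mathcomp Require Import complex.
From mathcomp Require Import ring lra.
Set Implicit Arguments. Unset Strict Implicit. Unset Printing Implicit Defensive.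
Import Order.TTheory GRing.Theory Num.Theory.
Local Open Scope ring_scope.

Section Gen.
Variable C : numClosedFieldType.

Lemma sq_ge0 (z : C) : 0 <= `|z| ^+ 2.
Proof. exact: exprn_ge0. Qed.

Lemma sum_sq_ge0 (I : finType) (f : I -> C) : 0 <= \sum_i `|f i| ^+ 2.
Proof. by apply: sumr_ge0 => i _; apply: sq_ge0. Qed.

Lemma sum_sq_eq0 (I : finType) (f : I -> C) : \sum_i `|f i| ^+ 2 = 0 -> forall i, f i = 0.
Proof.
move=> H i; have := psumr_eq0P (P := xpredT) (F := fun i => `|f i| ^+ 2).
move=> /(_ (fun j _ => sq_ge0 (f j)) H i isT) /eqP.
by rewrite expf_eq0 /= normr_eq0 => /eqP.
Qed.

Lemma sum_expand (I : finType) (f g : I -> C) (l : C) :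
  \sum_i `|f i - l * g i| ^+ 2 =
  \sum_i f i * (f i)^* - l^* * \sum_i f i * (g i)^* - l * \sum_i g i * (f i)^*
  + l * l^* * \sum_i g i * (g i)^*.
Proof.
rewrite !mulr_sumr -!sumrB -!big_split /=; apply: eq_bigr => i _.
rewrite normCK rmorphB rmorphM /=; ring.
Qed.

Lemma CS (I : finType) (x y : I -> C) :
  `|\sum_i x i * y i| ^+ 2 <= (\sum_i `|x i| ^+ 2) * (\sum_i `|y i| ^+ 2).
Proof.
set A := \sum_i `|x i| ^+ 2; set B := \sum_i `|y i| ^+ 2; set c := \sum_i x i * y i.
have B0 : 0 <= B by apply: sum_sq_ge0.
have [BE|BN] := eqVneq B 0.
  have y0 := sum_sq_eq0 BE.
  have -> : c = 0 by rewrite /c big1 // => i _; rewrite y0 mulr0.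
  by rewrite normr0 expr0n /= mulr_ge0 // sum_sq_ge0.
have Bp : 0 < B by rewrite lt_def BN B0.
have := sum_sq_ge0 (fun i => x i - (c / B) * (y i)^*).
rewrite sum_expand.
have -> : \sum_i x i * (x i)^* = A by apply: eq_bigr => i _; rewrite normCK.
have -> : \sum_i (y i)^* * ((y i)^*)^* = B by apply: eq_bigr => i _; rewrite conjCK normCK mulrC.
have -> : \sum_i x i * ((y i)^*)^* = c by apply: eq_bigr => i _; rewrite conjCK.
have -> : \sum_i (y i)^* * (x i)^* = c^* by rewrite rmorph_sum; apply: eq_bigr => i _; rewrite rmorphM mulrC.
have Bc : B^* = B by apply: geC0_conj.
rewrite rmorphM rmorphV ?unitfE //=; rewrite Bc.
have -> : A - c^* / B * c - c / B * c^* + c / B * (c^* / B) * B = A - c * c^* / B by field.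
rewrite subr_ge0 ler_pdivrMr // -normCK mulrC => H.
by [].
Qed.


Lemma sqD_le (a b : C) : `|a + b| ^+ 2 <= 2 * `|a| ^+ 2 + 2 * `|b| ^+ 2.
Proof.
have := sq_ge0 (a - b); rewrite !normCK !rmorphD !rmorphN /= => H.
rewrite -subr_ge0; have -> : 2 * (a * a^*) + 2 * (b * b^*) - (a + b) * (a^* + b^*)
   = (a - b) * (a^* - b^*) by ring.
by [].
Qed.

Lemma PL_orth (I : finType) (a1 a2 b1 b2 : I -> C) :
  \sum_j (b1 j)^* * b2 j = 0 ->
  \sum_i \sum_j `|a1 i * b1 j + a2 i * b2 j| ^+ 2 =
  (\sum_i `|a1 i| ^+ 2) * (\sum_j `|b1 j| ^+ 2) + (\sum_i `|a2 i| ^+ 2) * (\sum_j `|b2 j| ^+ 2).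
Proof.
move=> Ho.
have Ho' : \sum_j b1 j * (b2 j)^* = 0.
  apply/eqP; rewrite -conjC_eq0 rmorph_sum /=; apply/eqP; rewrite -[RHS]Ho.
  by apply: eq_bigr => j _; rewrite rmorphM /= conjCK mulrC.
have E : \sum_i \sum_j `|a1 i * b1 j + a2 i * b2 j| ^+ 2 =
  \sum_i \sum_j (`|a1 i| ^+ 2 * `|b1 j| ^+ 2 + (a2 i * (a1 i)^*) * ((b1 j)^* * b2 j)
     + (a1 i * (a2 i)^*) * (b1 j * (b2 j)^*) + `|a2 i| ^+ 2 * `|b2 j| ^+ 2).
  apply: eq_bigr => i _; apply: eq_bigr => j _; rewrite !normCK rmorphD !rmorphM /=; ring.
rewrite E.
under eq_bigr do rewrite !big_split /=.
rewrite !big_split /= -!big_distrlr /= Ho Ho' !mulr0 !addr0.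
by [].
Qed.

Lemma PL (I : finType) (a1 a2 b1 b2 : I -> C) :
  `|\sum_m (a1 m * b1 m + a2 m * b2 m)| ^+ 2 <=
  2 * \sum_i \sum_j `|a1 i * b1 j + a2 i * b2 j| ^+ 2.
Proof.
pose B1 := \sum_j `|b1 j| ^+ 2.
pose c := (\sum_j (b1 j)^* * b2 j) / B1.
pose b2' := fun j => b2 j - c * b1 j.
pose a1' := fun i => a1 i + c * a2 i.
have Eij : forall i j, a1 i * b1 j + a2 i * b2 j = a1' i * b1 j + a2 i * b2' j.
  by move=> i j; rewrite /a1' /b2'; ring.
have Ho : \sum_j (b1 j)^* * b2' j = 0.
  have [B0|BN] := eqVneq B1 0.
    by rewrite big1 // => j _; rewrite (sum_sq_eq0 B0 j) conjC0 mul0r.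
  rewrite /b2' /c; under eq_bigr do rewrite mulrBr.
  rewrite sumrB; under [X in _ - X]eq_bigr do rewrite mulrCA.
  rewrite -mulr_sumr.
  have -> : \sum_i (b1 i)^* * b1 i = B1 by apply: eq_bigr => j _; rewrite normCK mulrC.
  by rewrite divfK // subrr.
under eq_bigr => m _ do rewrite (Eij m m).
under [X in _ <= _ * X]eq_bigr => i _ do under eq_bigr => j _ do rewrite Eij.
rewrite (PL_orth _ _ Ho) big_split /=.
apply: le_trans (sqD_le _ _) _.
rewrite mulrDr lerD // ler_wpM2l // CS //.
Qed.

End Gen.

Section Gen2.
Variable C : numClosedFieldType.
Variable d : nat.

Lemma pairE (I J : finType) (F : I * J -> C) : \sum_p F p = \sum_i \sum_j F (i, j).
Proof. by rewrite pair_bigA; apply: eq_bigr => -[i j]. Qed.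

Lemma sum_idx4 (F : idx4 d -> C) :
  \sum_(k : idx4 d) F k = \sum_i1 \sum_i2 \sum_i3 \sum_(i4 : 'I_d) F (i1, i2, i3, i4).
Proof. by rewrite pairE pairE pairE. Qed.

Lemma sum_delta_l (I : finType) (i : I) (F : I -> C) : \sum_j (i == j)%:R * F j = F i.
Proof.
rewrite (bigD1 i) //= eqxx mul1r big1 ?addr0 // => j /negPf.
by rewrite eq_sym => ->; rewrite mul0r.
Qed.


Lemma sum_diag (G : 'I_d -> 'I_d -> C) :
  \sum_l3 \sum_l4 (l3 == l4)%:R * G l3 l4 = \sum_m G m m.
Proof. by apply: eq_bigr => l3 _; rewrite sum_delta_l. Qed.

Variable psi : vec4 C d.
Local Notation p i1 i2 i3 i4 := (psi (i1, i2, i3, i4)).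

Lemma inner_II (k : idx4 d) : \sum_l ptB (@op_II C d) k l * psi l = psi k.
Proof.
have E : forall l, ptB (@op_II C d) k l = (k == l)%:R.
  case: k => [[[k1 k2] k3] k4] [[[l1 l2] l3] l4].
  rewrite /ptB /op_II /delta /= !xpair_eqE (eq_sym l2) (eq_sym l4).
  by case: (k1 == l1); case: (k2 == l2); case: (k3 == l3); case: (k4 == l4);
    rewrite /= ?mul1r ?mul0r ?mulr0.
by under eq_bigr do rewrite E; rewrite sum_delta_l.
Qed.

Lemma inner_IF (k : idx4 d) : \sum_l ptB (@op_IF C d) k l * psi l =
  (i3 k == i4 k)%:R * \sum_m p (i1 k) (i2 k) m m.
Proof.
case: k => [[[k1 k2] k3] k4]; rewrite sum_idx4 /=.
transitivity (\sum_l1 (k1 == l1)%:R * \sum_l2 (k2 == l2)%:R *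
   ((k3 == k4)%:R * \sum_l3 \sum_l4 (l3 == l4)%:R * p l1 l2 l3 l4)).
  apply: eq_bigr => l1 _; rewrite mulr_sumr; apply: eq_bigr => l2 _.
  rewrite !mulr_sumr; apply: eq_bigr => l3 _; rewrite !mulr_sumr; apply: eq_bigr => l4 _.
  rewrite /ptB /op_IF /delta /= (eq_sym l2) (eq_sym l4); ring.
under [X in X = _]eq_bigr => l1 _ do under eq_bigr => l2 _ do rewrite sum_diag.
under [X in X = _]eq_bigr => l1 _ do rewrite sum_delta_l.
by rewrite sum_delta_l.
Qed.

Lemma inner_FI (k : idx4 d) : \sum_l ptB (@op_FI C d) k l * psi l =
  (i1 k == i2 k)%:R * \sum_m p m m (i3 k) (i4 k).
Proof.
case: k => [[[k1 k2] k3] k4]; rewrite sum_idx4 /=.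
transitivity ((k1 == k2)%:R * \sum_l1 \sum_l2 (l1 == l2)%:R *
   (\sum_l3 (k3 == l3)%:R * \sum_l4 (k4 == l4)%:R * p l1 l2 l3 l4)).
  rewrite mulr_sumr; apply: eq_bigr => l1 _; rewrite !mulr_sumr; apply: eq_bigr => l2 _.
  rewrite !mulr_sumr; apply: eq_bigr => l3 _; rewrite !mulr_sumr; apply: eq_bigr => l4 _.
  rewrite /ptB /op_FI /delta /= (eq_sym l2) (eq_sym l4); ring.
under [X in _ * X = _]eq_bigr => l1 _ do under eq_bigr => l2 _ do under eq_bigr => l3 _ do
  rewrite sum_delta_l.
under [X in _ * X = _]eq_bigr => l1 _ do under eq_bigr => l2 _ do rewrite sum_delta_l.
by rewrite sum_diag.
Qed.

Lemma inner_FF (k : idx4 d) : \sum_l ptB (@op_FF C d) k l * psi l =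
  (i1 k == i2 k)%:R * (i3 k == i4 k)%:R * \sum_m \sum_n p m m n n.
Proof.
case: k => [[[k1 k2] k3] k4]; rewrite sum_idx4 /=.
transitivity ((k1 == k2)%:R * (k3 == k4)%:R * \sum_l1 \sum_l2 (l1 == l2)%:R *
   (\sum_l3 \sum_l4 (l3 == l4)%:R * p l1 l2 l3 l4)).
  rewrite mulr_sumr; apply: eq_bigr => l1 _; rewrite !mulr_sumr; apply: eq_bigr => l2 _.
  rewrite !mulr_sumr; apply: eq_bigr => l3 _; rewrite !mulr_sumr; apply: eq_bigr => l4 _.
  rewrite /ptB /op_FF /delta /= (eq_sym l2) (eq_sym l4); ring.
under [X in _ * X = _]eq_bigr => l1 _ do under eq_bigr => l2 _ do rewrite sum_diag.
by rewrite sum_diag.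
Qed.


Definition Xq := \sum_i1 \sum_i2 \sum_i3 \sum_i4 `|p i1 i2 i3 i4| ^+ 2.
Definition Uq := \sum_i1 \sum_i2 `|\sum_m p i1 i2 m m| ^+ 2.
Definition Vq := \sum_i3 \sum_i4 `|\sum_m p m m i3 i4| ^+ 2.
Definition Sq := `|\sum_m \sum_n p m m n n| ^+ 2.

Lemma sumC3 (F : 'I_d -> 'I_d -> 'I_d -> C) :
  \sum_m \sum_i3 \sum_i4 F m i3 i4 = \sum_i3 \sum_i4 \sum_m F m i3 i4.
Proof.
rewrite exchange_big; apply: eq_bigr => i3 _; exact: exchange_big.
Qed.

Lemma outer_X : \sum_k (psi k)^* * psi k = Xq.
Proof.
rewrite sum_idx4; do 4 (apply: eq_bigr => ? _); by rewrite normCK mulrC.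
Qed.

Lemma outer_U : \sum_k (psi k)^* * ((i3 k == i4 k)%:R * \sum_m p (i1 k) (i2 k) m m) = Uq.
Proof.
rewrite sum_idx4 /Uq; apply: eq_bigr => i1 _; apply: eq_bigr => i2 _ /=.
transitivity (\sum_i3 \sum_i4 (i3 == i4)%:R * ((p i1 i2 i3 i4)^* * \sum_m p i1 i2 m m)).
  by do 2 (apply: eq_bigr => ? _); rewrite mulrCA.
by rewrite sum_diag -mulr_suml -rmorph_sum normCK mulrC.
Qed.

Lemma outer_V : \sum_k (psi k)^* * ((i1 k == i2 k)%:R * \sum_m p m m (i3 k) (i4 k)) = Vq.
Proof.
rewrite sum_idx4 /Vq /=.
transitivity (\sum_i1 \sum_i2 (i1 == i2)%:R * \sum_i3 \sum_i4 ((p i1 i2 i3 i4)^* * \sum_m p m m i3 i4)).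
  apply: eq_bigr => i1 _; apply: eq_bigr => i2 _; rewrite !mulr_sumr; apply: eq_bigr => i3 _.
  by rewrite !mulr_sumr; apply: eq_bigr => i4 _; rewrite mulrCA.
rewrite sum_diag sumC3; apply: eq_bigr => i3 _; apply: eq_bigr => i4 _.
by rewrite -mulr_suml -rmorph_sum normCK mulrC.
Qed.

Lemma outer_S : \sum_k (psi k)^* * ((i1 k == i2 k)%:R * (i3 k == i4 k)%:R * \sum_m \sum_n p m m n n) = Sq.
Proof.
rewrite sum_idx4 /Sq /=.
transitivity (\sum_i1 \sum_i2 (i1 == i2)%:R * \sum_i3 \sum_i4 (i3 == i4)%:R * ((p i1 i2 i3 i4)^* * \sum_m \sum_n p m m n n)).
  apply: eq_bigr => i1 _; apply: eq_bigr => i2 _; rewrite !mulr_sumr; apply: eq_bigr => i3 _.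
  by rewrite !mulr_sumr; apply: eq_bigr => i4 _; ring.
rewrite sum_diag.
under [X in X = _]eq_bigr => m _ do rewrite sum_diag -mulr_suml.
rewrite -mulr_suml normCK mulrC; congr (_ * _).
rewrite rmorph_sum; apply: eq_bigr => m _; by rewrite rmorph_sum.
Qed.

Lemma qform_gen (c1 c2 : C) :
  qform (ptB (fun k l => @op_II C d k l + c1 * (@op_IF C d k l + @op_FI C d k l) + c2 * @op_FF C d k l)) psi
  = Xq + c1 * (Uq + Vq) + c2 * Sq.
Proof.
rewrite /qform.
transitivity (\sum_k ((psi k)^* * psi k + c1 * ((psi k)^* * ((i3 k == i4 k)%:R * \sum_m p (i1 k) (i2 k) m m)
   + (psi k)^* * ((i1 k == i2 k)%:R * \sum_m p m m (i3 k) (i4 k)))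
   + c2 * ((psi k)^* * ((i1 k == i2 k)%:R * (i3 k == i4 k)%:R * \sum_m \sum_n p m m n n)))).
  apply: eq_bigr => k _.
  under eq_bigr do rewrite -mulrA.
  rewrite -mulr_sumr.
  transitivity ((psi k)^* * (\sum_l ptB (@op_II C d) k l * psi l + c1 * (\sum_l ptB (@op_IF C d) k l * psi l
      + \sum_l ptB (@op_FI C d) k l * psi l) + c2 * \sum_l ptB (@op_FF C d) k l * psi l)).
    congr (_ * _).
    rewrite (eq_bigr (fun l => ptB (@op_II C d) k l * psi l + c1 * (ptB (@op_IF C d) k l * psi l
      + ptB (@op_FI C d) k l * psi l) + c2 * (ptB (@op_FF C d) k l * psi l))); last first.
      by move=> l _; rewrite /ptB; ring.
    by rewrite !big_split /= -!mulr_sumr big_split.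
  rewrite inner_II inner_IF inner_FI inner_FF; ring.
rewrite !big_split /= -!mulr_sumr big_split /=.
by rewrite outer_X outer_U outer_V outer_S.
Qed.

End Gen2.

Section Aux.
Variable C : numClosedFieldType.

Lemma sum4_swap (I : finType) (F : I -> I -> I -> I -> C) :
  \sum_x \sum_y \sum_z \sum_w F x y z w = \sum_z \sum_w \sum_x \sum_y F x y z w.
Proof.
transitivity (\sum_x \sum_z \sum_w \sum_y F x y z w).
  apply: eq_bigr => x _; rewrite exchange_big; apply: eq_bigr => z _; exact: exchange_big.
rewrite exchange_big; apply: eq_bigr => z _; exact: exchange_big.
Qed.

Lemma sum4_swap23 (I : finType) (F : I -> I -> I -> I -> C) :
  \sum_x \sum_y \sum_z \sum_w F x y z w = \sum_x \sum_z \sum_y \sum_w F x y z w.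
Proof. by apply: eq_bigr => x _; rewrite exchange_big. Qed.

Lemma diag_le (I : finType) (F : I -> I -> C) : (forall i j, 0 <= F i j) ->
  \sum_i F i i <= \sum_i \sum_j F i j.
Proof.
move=> H; apply: ler_sum => i _; rewrite (bigD1 i) //= lerDl.
by apply: sumr_ge0 => j _; apply: H.
Qed.

Lemma CS1 (I : finType) (x : I -> C) :
  `|\sum_i x i| ^+ 2 <= #|I|%:R * \sum_i `|x i| ^+ 2.
Proof.
have := CS x (fun _ => 1); under eq_bigr do rewrite mulr1.
by rewrite normr1 expr1n sumr_const mulrC => H; apply: le_trans H _.
Qed.


Lemma four_id (P Q R T : C) :
  `|P + (-1) * Q + 1 * R - T| ^+ 2 + `|P + 'i * Q + 'i * R - T| ^+ 2
  + `|P + 1 * Q + (-1) * R - T| ^+ 2 + `|P + (- 'i) * Q + (- 'i) * R - T| ^+ 2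
  = 4 * (`|P - T| ^+ 2 + `|Q| ^+ 2 + `|R| ^+ 2).
Proof.
have hi : 'i * 'i = -1 :> C by rewrite -expr2 sqrCi.
rewrite !normCK !rmorphB !rmorphD !rmorphM !rmorphN /= conjCi rmorph1 /=.
transitivity (4 * ((P - T) * (P^* - T^*) + Q * Q^* + R * R^*) + ('i * 'i + 1) * (-2 * (Q + R) * (Q^* + R^*))).
  ring.
by rewrite hi addNr mul0r addr0.
Qed.

Lemma four_sum (I : finType) (P Q R T : I -> I -> C) (tP tQ tR tT : C) :
  let q al be i j := P i j + al * Q i j + be * R i j - T i j in
  let t al be := tP + al * tQ + be * tR - tT in
  let g al be := 2 * \sum_i \sum_j `|q al be i j| ^+ 2 - `|t al be| ^+ 2 in
  g (-1) 1 + g 'i 'i + g 1 (-1) + g (- 'i) (- 'i) =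
  4 * (2 * \sum_i \sum_j (`|P i j - T i j| ^+ 2 + `|Q i j| ^+ 2 + `|R i j| ^+ 2)
       - (`|tP - tT| ^+ 2 + `|tQ| ^+ 2 + `|tR| ^+ 2)).
Proof.
move=> q t g; rewrite /g.
have Et : `|t (-1) 1| ^+ 2 + `|t 'i 'i| ^+ 2 + `|t 1 (-1)| ^+ 2 + `|t (- 'i) (- 'i)| ^+ 2
   = 4 * (`|tP - tT| ^+ 2 + `|tQ| ^+ 2 + `|tR| ^+ 2) by rewrite /t; exact: four_id.
have Eq : \sum_i \sum_j `|q (-1) 1 i j| ^+ 2 + \sum_i \sum_j `|q 'i 'i i j| ^+ 2
   + \sum_i \sum_j `|q 1 (-1) i j| ^+ 2 + \sum_i \sum_j `|q (- 'i) (- 'i) i j| ^+ 2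
   = 4 * \sum_i \sum_j (`|P i j - T i j| ^+ 2 + `|Q i j| ^+ 2 + `|R i j| ^+ 2).
  rewrite -!big_split /= mulr_sumr; apply: eq_bigr => i _.
  rewrite -!big_split /= mulr_sumr; apply: eq_bigr => j _.
  by rewrite /q; exact: four_id.
set B := \sum_i \sum_j (`|P i j - T i j| ^+ 2 + `|Q i j| ^+ 2 + `|R i j| ^+ 2).
set TB := `|tP - tT| ^+ 2 + `|tQ| ^+ 2 + `|tR| ^+ 2.
transitivity (2 * (4 * B) - 4 * TB); last by ring.
rewrite -Eq -Et; ring.
Qed.

Lemma diffsq (I : finType) (x : I -> C) :
  \sum_m \sum_n `|x m - x n| ^+ 2 = 2 * #|I|%:R * \sum_m `|x m| ^+ 2 - 2 * `|\sum_m x m| ^+ 2.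
Proof.
have E : forall m n, `|x m - x n| ^+ 2 =
   x m * (x m)^* * 1 + 1 * (x n * (x n)^*) - x m * (x n)^* - (x m)^* * x n.
  by move=> m n; rewrite normCK rmorphB /=; ring.
under eq_bigr do under eq_bigr do rewrite E.
under eq_bigr do rewrite !sumrB !big_split /=.
rewrite !sumrB !big_split /= -!big_distrlr /=.
rewrite normCK rmorph_sum /=.
under [X in _ = _ * _ * X - _]eq_bigr do rewrite normCK.
have -> : \sum_(i : I) 1 = #|I|%:R :> C by rewrite sumr_const.
ring.
Qed.


Lemma sum4D3 (I : finType) (F G H : I -> I -> I -> I -> C) :
  \sum_x \sum_y \sum_z \sum_w (F x y z w + G x y z w + H x y z w) =
  \sum_x \sum_y \sum_z \sum_w F x y z w + \sum_x \sum_y \sum_z \sum_w G x y z w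
  + \sum_x \sum_y \sum_z \sum_w H x y z w.
Proof.
rewrite -!big_split; apply: eq_bigr => x _; rewrite -!big_split; apply: eq_bigr => y _.
rewrite -!big_split; apply: eq_bigr => z _; by rewrite -!big_split.
Qed.

Lemma sum2D3 (I : finType) (F G H : I -> I -> C) :
  \sum_x \sum_y (F x y + G x y + H x y) =
  \sum_x \sum_y F x y + \sum_x \sum_y G x y + \sum_x \sum_y H x y.
Proof. by rewrite -!big_split; apply: eq_bigr => x _; rewrite -!big_split. Qed.

Lemma sum3_rot (I : finType) (F : I -> I -> I -> C) :
  \sum_m \sum_x \sum_y F m x y = \sum_x \sum_y \sum_m F m x y.
Proof. rewrite exchange_big; apply: eq_bigr => x _; exact: exchange_big. Qed.

End Aux.

Section Rank2.
Variables (C : numClosedFieldType) (d : nat) (psi : vec4 C d) (a b : 'I_2 -> 'I_d -> 'I_d -> C).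
Hypothesis Hpsi : forall k : idx4 d, psi k = \sum_(r < 2) a r (i1 k) (i3 k) * b r (i2 k) (i4 k).
Local Notation p i1 i2 i3 i4 := (psi (i1, i2, i3, i4)).
Let a0 := a ord0. Let a1 := a ord_max. Let b0 := b ord0. Let b1 := b ord_max.

Lemma pE i1 i2 i3 i4 : p i1 i2 i3 i4 = a0 i1 i3 * b0 i2 i4 + a1 i1 i3 * b1 i2 i4.
Proof.
rewrite Hpsi big_ord_recr big_ord1 /=.
suff -> : widen_ord (leqnSn 1) ord0 = ord0 :> 'I_2 by [].
exact: val_inj.
Qed.

Lemma U_le : Uq psi <= 2 * Xq psi.
Proof.
rewrite /Uq /Xq mulr_sumr; apply: ler_sum => i1 _; rewrite mulr_sumr; apply: ler_sum => i2 _.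
under [X in `|X| ^+ 2 <= _]eq_bigr do rewrite pE.
under [X in _ <= _ * X]eq_bigr do under eq_bigr do rewrite pE.
exact: (PL (fun m => a0 i1 m) (fun m => a1 i1 m) (fun m => b0 i2 m) (fun m => b1 i2 m)).
Qed.

Lemma V_le : Vq psi <= 2 * Xq psi.
Proof.
rewrite /Vq /Xq sum4_swap mulr_sumr; apply: ler_sum => i3 _; rewrite mulr_sumr; apply: ler_sum => i4 _.
under [X in `|X| ^+ 2 <= _]eq_bigr do rewrite pE.
under [X in _ <= _ * X]eq_bigr do under eq_bigr do rewrite pE.
exact: (PL (fun m => a0 m i3) (fun m => a1 m i3) (fun m => b0 m i4) (fun m => b1 m i4)).
Qed.

Lemma S_le : Sq psi <= 2 * Xq psi.
Proof.
rewrite /Sq /Xq sum4_swap23.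
under [X in `|X| ^+ 2 <= _]eq_bigr do under eq_bigr do rewrite pE.
under [X in _ <= _ * X]eq_bigr do under eq_bigr do under eq_bigr do under eq_bigr do rewrite pE.
have := PL (fun q : 'I_d * 'I_d => a0 q.1 q.2) (fun q => a1 q.1 q.2) (fun q => b0 q.1 q.2) (fun q => b1 q.1 q.2).
rewrite pairE /=.
rewrite [X in _ <= _ * X -> _]pairE.
under [X in _ <= _ * X -> _]eq_bigr do under eq_bigr do rewrite pairE.
by [].
Qed.

Lemma S_leU : Sq psi <= d%:R * Uq psi.
Proof.
rewrite /Sq; apply: le_trans (CS1 _) _; rewrite card_ord ler_wpM2l ?ler0n //.
rewrite /Uq; have := (@diag_le C _ (fun i j : 'I_d => `|\sum_m p i j m m| ^+ 2)).
by move=> /(_ (fun i j => sq_ge0 _)).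
Qed.

Lemma S_leV : Sq psi <= d%:R * Vq psi.
Proof.
rewrite /Sq exchange_big; apply: le_trans (CS1 _) _; rewrite card_ord ler_wpM2l ?ler0n //.
rewrite /Vq; have := (@diag_le C _ (fun i j : 'I_d => `|\sum_m p m m i j| ^+ 2)).
by move=> /(_ (fun i j => sq_ge0 _)).
Qed.


Definition tt m n := \sum_i p i i m n.
Definition Gf m n := 2 * \sum_i1 \sum_i2 `|p i1 i2 m n| ^+ 2 - `|tt m n| ^+ 2.
Definition Phi m n := 2 * \sum_i1 \sum_i2 (`|p i1 i2 m m - p i1 i2 n n| ^+ 2 + `|p i1 i2 m n| ^+ 2
   + `|p i1 i2 n m| ^+ 2) - (`|tt m m - tt n n| ^+ 2 + `|tt m n| ^+ 2 + `|tt n m| ^+ 2).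

Lemma G_ge0 m n : 0 <= Gf m n.
Proof.
rewrite /Gf subr_ge0 /tt.
under [X in `|X| ^+ 2 <= _]eq_bigr do rewrite pE.
under [X in _ <= _ * X]eq_bigr do under eq_bigr do rewrite pE.
exact: (PL (fun i => a0 i m) (fun i => a1 i m) (fun i => b0 i n) (fun i => b1 i n)).
Qed.

Lemma Gab_ge0 m n (al be : C) : al * be = -1 ->
  0 <= 2 * \sum_i1 \sum_i2 `|p i1 i2 m m + al * p i1 i2 m n + be * p i1 i2 n m - p i1 i2 n n| ^+ 2
       - `|tt m m + al * tt m n + be * tt n m - tt n n| ^+ 2.
Proof.
move=> hab.
pose A0 i := a0 i m + be * a0 i n. pose A1 i := a1 i m + be * a1 i n.
pose B0 i := b0 i m + al * b0 i n. pose B1 i := b1 i m + al * b1 i n.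
have E : forall i j, p i j m m + al * p i j m n + be * p i j n m - p i j n n = A0 i * B0 j + A1 i * B1 j.
  move=> i j; rewrite !pE /A0 /A1 /B0 /B1.
  apply/eqP; rewrite -subr_eq0; apply/eqP.
  transitivity ((al * be + 1) * - (a0 i n * b0 j n + a1 i n * b1 j n)); first by ring.
  by rewrite hab addNr mul0r.
have Et : tt m m + al * tt m n + be * tt n m - tt n n =
    \sum_i (p i i m m + al * p i i m n + be * p i i n m - p i i n n).
  by rewrite /tt sumrB !big_split /= -!mulr_sumr.
rewrite subr_ge0 Et.
under [X in `|X| ^+ 2 <= _]eq_bigr do rewrite E.
under [X in _ <= _ * X]eq_bigr do under eq_bigr do rewrite E.
exact: (PL A0 A1 B0 B1).
Qed.

Lemma Phi_ge0 m n : 0 <= Phi m n.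
Proof.
have hi : 'i * 'i = -1 :> C by rewrite -expr2 sqrCi.
have four_pos : (0 : C) < 4 by rewrite ltr0n.
rewrite -(pmulr_rge0 _ four_pos) /Phi.
have := four_sum (fun i j => p i j m m) (fun i j => p i j m n) (fun i j => p i j n m)
  (fun i j => p i j n n) (tt m m) (tt m n) (tt n m) (tt n n).
move=> /= <-.
apply: addr_ge0; first apply: addr_ge0; first apply: addr_ge0.
- by apply: Gab_ge0; rewrite mulr1.
- exact: Gab_ge0.
- by apply: Gab_ge0; rewrite mul1r.
- by apply: Gab_ge0; rewrite mulrNN hi.
Qed.


Lemma sumPhi : \sum_m \sum_n Phi m n =
  2 * ((2 * d%:R * \sum_i1 \sum_i2 \sum_m `|p i1 i2 m m| ^+ 2 - 2 * Uq psi) + Xq psi + Xq psi)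
  - ((2 * d%:R * \sum_m `|tt m m| ^+ 2 - 2 * Sq psi) + Vq psi + Vq psi).
Proof.
rewrite /Phi.
under eq_bigr do rewrite sumrB -mulr_sumr.
rewrite sumrB -mulr_sumr sum4D3 sum2D3.
have T1 : \sum_x \sum_y \sum_z \sum_w `|p z w x x - p z w y y| ^+ 2
   = 2 * d%:R * \sum_i1 \sum_i2 \sum_m `|p i1 i2 m m| ^+ 2 - 2 * Uq psi.
  rewrite sum4_swap.
  under eq_bigr do under eq_bigr do rewrite (diffsq (fun m => p _ _ m m)) card_ord.
  under eq_bigr do rewrite sumrB -!mulr_sumr.
  by rewrite sumrB -!mulr_sumr.
have T2 : \sum_x \sum_y \sum_z \sum_w `|p z w x y| ^+ 2 = Xq psi by rewrite sum4_swap.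
have T3 : \sum_x \sum_y \sum_z \sum_w `|p z w y x| ^+ 2 = Xq psi.
  by rewrite exchange_big sum4_swap.
have B1 : \sum_x \sum_y `|tt x x - tt y y| ^+ 2 = 2 * d%:R * \sum_m `|tt m m| ^+ 2 - 2 * Sq psi.
  rewrite diffsq card_ord /Sq /tt; congr (_ - 2 * `|_| ^+ 2); exact: exchange_big.
have B2 : \sum_x \sum_y `|tt x y| ^+ 2 = Vq psi by [].
have B3 : \sum_x \sum_y `|tt y x| ^+ 2 = Vq psi by rewrite exchange_big.
by rewrite T1 T2 T3 B1 B2 B3.
Qed.

Lemma sumG : \sum_m \sum_n Gf m n = 2 * Xq psi - Vq psi.
Proof.
rewrite /Gf.
under eq_bigr do rewrite sumrB -mulr_sumr.
by rewrite sumrB -mulr_sumr sum4_swap.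
Qed.

Lemma F6 : (0 < d)%N -> 0 <= 2 * d%:R * Xq psi - 2 * Uq psi - d%:R * Vq psi + Sq psi.
Proof.
move=> hd.
pose W m n := Phi m n + 2 * (d%:R - 1) * Gf m n.
have hd1 : (0 : C) <= d%:R - 1 by rewrite subr_ge0 ler1n.
have Wge0 : forall m n, 0 <= W m n.
  by move=> m n; rewrite addr_ge0 ?Phi_ge0 // !mulr_ge0 // G_ge0.
set D := \sum_i1 \sum_i2 \sum_m `|p i1 i2 m m| ^+ 2.
set E := \sum_m `|tt m m| ^+ 2.
have HW : \sum_m \sum_n W m n = \sum_m \sum_n Phi m n + 2 * (d%:R - 1) * \sum_m \sum_n Gf m n.
  rewrite mulr_sumr -big_split; apply: eq_bigr => m _; by rewrite mulr_sumr -big_split.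
have Hsplit : \sum_m \sum_n W m n = \sum_m W m m + \sum_m \sum_(n | n != m) W m n.
  rewrite -big_split /=; apply: eq_bigr => m _; exact: (bigD1 m).
have Hdiag : \sum_m W m m = 4 * d%:R * D - 2 * d%:R * E.
  have Hm : forall m, W m m = 4 * d%:R * (\sum_i \sum_j `|p i j m m| ^+ 2) - 2 * d%:R * `|tt m m| ^+ 2.
    move=> m; rewrite /W /Phi /Gf subrr normr0 expr0n /= add0r.
    under eq_bigr do under eq_bigr do rewrite subrr normr0 expr0n /= add0r.
    under eq_bigr do rewrite big_split /=.
    rewrite big_split /=. set Xm := \sum_(i < d) \sum_(j < d) `|p i j m m| ^+ 2. set tm := `|tt m m| ^+ 2. clearbody Xm tm. ring.
  under eq_bigr do rewrite Hm.
  by rewrite sumrB -!mulr_sumr sum3_rot.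
have Hoff : 0 <= \sum_m \sum_(n | n != m) W m n.
  by apply: sumr_ge0 => m _; apply: sumr_ge0 => n _; apply: Wge0.
have two_pos : (0 : C) < 2 by rewrite ltr0n.
rewrite -(pmulr_rge0 _ two_pos).
suff <- : \sum_m \sum_(n | n != m) W m n = 2 * (2 * d%:R * Xq psi - 2 * Uq psi - d%:R * Vq psi + Sq psi) by [].
apply: (addrI (\sum_m W m m)); rewrite -Hsplit HW sumPhi sumG Hdiag /D /E; ring.
Qed.

End Rank2.

Lemma final_real (R : realFieldType) (dR eps del x u v s : R) :
  2 <= dR -> 0 <= x -> 0 <= s -> s <= 2 * x -> u <= 2 * x -> v <= 2 * x -> s <= dR * u -> s <= dR * v ->
  0 <= 2 * dR * x - 2 * u - dR * v + s ->
  ((1 - 2 / dR) ^+ 2 + Num.min (4 * eps) 0 + Num.min (2 * del) 0 >= 0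
   \/ dR ^+ 2 + Num.min (4 * dR * (eps * dR - 1)) 0
        + Num.min (2 * (del * dR ^+ 2 - 1)) 0 >= 0) ->
  0 <= x + ((eps * dR - 1) / dR) * (u + v) + ((1 - 2 * eps * dR + del * dR ^+ 2) / dR ^+ 2) * s.
Proof.
move=> hd hx hs hs2x hu hv hsu hsv hF6 hc.
have dpos : 0 < dR by lra.
have hF4 : 0 <= (4 * dR - 4) * x - dR * (u + v) + s.
  have h1 : 0 <= dR - 2 by lra.
  have h2 : 0 <= 2 * x - u by lra.
  have h := mulr_ge0 h1 h2.
  have -> : (4 * dR - 4) * x - dR * (u + v) + s = (2 * dR * x - 2 * u - dR * v + s) + (dR - 2) * (2 * x - u) by ring.
  by apply: addr_ge0.
have d2pos : 0 < dR ^+ 2 by rewrite exprn_gt0.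
have E : x + ((eps * dR - 1) / dR) * (u + v) + ((1 - 2 * eps * dR + del * dR ^+ 2) / dR ^+ 2) * s
   = (dR ^+ 2 * x + dR * (eps * dR - 1) * (u + v) + (1 - 2 * eps * dR + del * dR ^+ 2) * s) / dR ^+ 2.
  by field; rewrite gt_eqF.
rewrite E; apply: divr_ge0; last exact: ltW d2pos.
set t := dR * (u + v) - 2 * s.
have ht0 : 0 <= t by rewrite /t; lra.
have ht1 : t <= 4 * dR * x by rewrite /t; nra.
have ht2 : 0 <= 4 * dR * x - t by lra.
have hs2 : 0 <= 2 * x - s by lra.
case: hc => hc.
- have hc' : 0 <= (dR - 2) ^+ 2 + dR ^+ 2 * Num.min (4 * eps) 0 + dR ^+ 2 * Num.min (2 * del) 0.
    have := mulr_ge0 (ltW d2pos) hc.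
    have -> : dR ^+ 2 * ((1 - 2 / dR) ^+ 2 + Num.min (4 * eps) 0 + Num.min (2 * del) 0)
       = (dR - 2) ^+ 2 + dR ^+ 2 * Num.min (4 * eps) 0 + dR ^+ 2 * Num.min (2 * del) 0.
      by field; rewrite gt_eqF.
    by [].
  have ha : (dR - 2) ^+ 2 * x <= dR ^+ 2 * x - dR * (u + v) + s by nra.
  have he : dR ^+ 2 * Num.min (4 * eps) 0 * x <= eps * dR * t.
    case: (leP (4 * eps) 0) => he.
      have hne : 0 <= - eps by lra.
      have h := mulr_ge0 (mulr_ge0 hne (ltW dpos)) ht2.
      lra.
    have hne : 0 <= eps by lra.
    have h := mulr_ge0 (mulr_ge0 hne (ltW dpos)) ht0.
    lra.
  have hdl : dR ^+ 2 * Num.min (2 * del) 0 * x <= del * dR ^+ 2 * s.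
    case: (leP (2 * del) 0) => hd'.
      have hne : 0 <= - del by lra.
      have h := mulr_ge0 (mulr_ge0 hne (ltW d2pos)) hs2.
      lra.
    have hne : 0 <= del by lra.
    have h := mulr_ge0 (mulr_ge0 hne (ltW d2pos)) hs.
    lra.
  have hx' := mulr_ge0 hc' hx.
  rewrite /t in he.
  have H := lerD (lerD ha he) hdl.
  have L : ((dR - 2) ^+ 2 + dR ^+ 2 * Num.min (4 * eps) 0 + dR ^+ 2 * Num.min (2 * del) 0) * x
     = (dR - 2) ^+ 2 * x + dR ^+ 2 * Num.min (4 * eps) 0 * x + dR ^+ 2 * Num.min (2 * del) 0 * x by ring.
  have RR : dR ^+ 2 * x + dR * (eps * dR - 1) * (u + v) + (1 - 2 * eps * dR + del * dR ^+ 2) * s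
     = dR ^+ 2 * x - dR * (u + v) + s + eps * dR * (dR * (u + v) - 2 * s) + del * dR ^+ 2 * s by ring.
  rewrite RR; apply: le_trans hx' _; rewrite L; exact: H.
- have hA : 4 * dR * Num.min (eps * dR - 1) 0 * x <= (eps * dR - 1) * t.
    case: (leP (eps * dR - 1) 0) => he.
      have hne : 0 <= - (eps * dR - 1) by lra.
      have h := mulr_ge0 hne ht2.
      lra.
    have hne : 0 <= eps * dR - 1 by lra.
    have h := mulr_ge0 hne ht0.
    lra.
  have hB : 2 * Num.min (del * dR ^+ 2 - 1) 0 * x <= (del * dR ^+ 2 - 1) * s.
    case: (leP (del * dR ^+ 2 - 1) 0) => hd'.
      have hne : 0 <= - (del * dR ^+ 2 - 1) by lra.
      have h := mulr_ge0 hne hs2.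
      lra.
    have hne : 0 <= del * dR ^+ 2 - 1 by lra.
    have h := mulr_ge0 hne hs.
    lra.
  have hmin1 : Num.min (4 * dR * (eps * dR - 1)) 0 = 4 * dR * Num.min (eps * dR - 1) 0.
    case: (leP (eps * dR - 1) 0) => he.
      by rewrite min_l // pmulr_rle0 // mulr_gt0.
    by rewrite min_r ?mulr0 // ltW // pmulr_rgt0 // mulr_gt0.
  have hmin2 : Num.min (2 * (del * dR ^+ 2 - 1)) 0 = 2 * Num.min (del * dR ^+ 2 - 1) 0.
    case: (leP (del * dR ^+ 2 - 1) 0) => he.
      by rewrite min_l // pmulr_rle0.
    by rewrite min_r ?mulr0 // ltW // pmulr_rgt0.
  rewrite hmin1 hmin2 in hc.
  have hx' := mulr_ge0 hc hx.
  rewrite /t in hA.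
  have H := lerD hA hB.
  have H2 : (dR ^+ 2 + 4 * dR * Num.min (eps * dR - 1) 0 + 2 * Num.min (del * dR ^+ 2 - 1) 0) * x
     <= dR ^+ 2 * x + ((eps * dR - 1) * (dR * (u + v) - 2 * s) + (del * dR ^+ 2 - 1) * s).
    have L2 : (dR ^+ 2 + 4 * dR * Num.min (eps * dR - 1) 0 + 2 * Num.min (del * dR ^+ 2 - 1) 0) * x
       = dR ^+ 2 * x + (4 * dR * Num.min (eps * dR - 1) 0 * x + 2 * Num.min (del * dR ^+ 2 - 1) 0 * x)
      by ring.
    by rewrite L2 lerD2l.
  have RR : dR ^+ 2 * x + dR * (eps * dR - 1) * (u + v) + (1 - 2 * eps * dR + del * dR ^+ 2) * s
     = dR ^+ 2 * x + ((eps * dR - 1) * (dR * (u + v) - 2 * s) + (del * dR ^+ 2 - 1) * s) by ring.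
  rewrite RR; exact: le_trans hx' H2.
Qed.

Section MainProof.
Local Open Scope complex_scope.
Lemma main_aux (R : rcfType) (d : nat) (eps del : R) :
  (2 <= d)%N ->
  psd (@rho R d eps del) ->
  ((1 - 2 / d%:R) ^+ 2 + Num.min (4 * eps) 0 + Num.min (2 * del) 0 >= 0
   \/ d%:R ^+ 2 + Num.min (4 * d%:R * (eps * d%:R - 1)) 0
        + Num.min (2 * (del * d%:R ^+ 2 - 1)) 0 >= 0) ->
  one_undistillable (@rho R d eps del).
Proof.
move=> hd _ hc psi [a [b Hpsi]].
pose c1 : R := (eps * d%:R - 1) / d%:R.
pose c2 : R := (1 - 2 * eps * d%:R + del * d%:R ^+ 2) / d%:R ^+ 2.
have Hq : qform (ptB (@rho R d eps del)) psi = Xq psi + c1%:C * (Uq psi + Vq psi) + c2%:C * Sq psi.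
  exact: qform_gen.
rewrite Hq.
have Xge0 : 0 <= Xq psi by rewrite /Xq; do 4 (apply: sumr_ge0 => ? _); apply: sq_ge0.
have Uge0 : 0 <= Uq psi by rewrite /Uq; do 2 (apply: sumr_ge0 => ? _); apply: sq_ge0.
have Vge0 : 0 <= Vq psi by rewrite /Vq; do 2 (apply: sumr_ge0 => ? _); apply: sq_ge0.
have Sge0 : 0 <= Sq psi by apply: sq_ge0.
have /complex_realP [x Ex] : Xq psi \is Num.real by apply: ger0_real.
have /complex_realP [u Eu] : Uq psi \is Num.real by apply: ger0_real.
have /complex_realP [v Ev] : Vq psi \is Num.real by apply: ger0_real.
have /complex_realP [s Es] : Sq psi \is Num.real by apply: ger0_real.
have hU := U_le Hpsi; have hV := V_le Hpsi; have hS := S_le Hpsi.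
have hSU := S_leU psi; have hSV := S_leV psi.
have hF6 := F6 Hpsi (leq_trans (isT : (0 < 2)%N) hd).
rewrite Ex Eu Ev Es in Xge0 Sge0 hU hV hS hSU hSV hF6 *.
have nC : forall n : nat, (n%:R : R)%:C = n%:R by move=> n; rewrite rmorph_nat.
have hx : 0 <= x by rewrite -ler0c.
have hs : 0 <= s by rewrite -ler0c.
have hu : u <= 2 * x by rewrite -lecR rmorphM /= nC.
have hv : v <= 2 * x by rewrite -lecR rmorphM /= nC.
have hs2 : s <= 2 * x by rewrite -lecR rmorphM /= nC.
have hsu : s <= d%:R * u by rewrite -lecR rmorphM /= nC.
have hsv : s <= d%:R * v by rewrite -lecR rmorphM /= nC.
have h6 : 0 <= 2 * d%:R * x - 2 * u - d%:R * v + s.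
  by rewrite -ler0c !rmorphD !rmorphN !rmorphM /= !nC.
have -> : x%:C + c1%:C * (u%:C + v%:C) + c2%:C * s%:C = (x + c1 * (u + v) + c2 * s)%:C.
  by rewrite !(rmorphD, rmorphM).
rewrite ler0c.
apply: final_real => //.
by rewrite ler_nat.
Qed.

End MainProof.

Theorem mainTheorem3 (R : rcfType) (d : nat) (eps del : R) :
  (2 <= d)%N ->
  psd (@rho R d eps del) ->
  ((1 - 2 / d%:R) ^+ 2 + Num.min (4 * eps) 0 + Num.min (2 * del) 0 >= 0
   \/ d%:R ^+ 2 + Num.min (4 * d%:R * (eps * d%:R - 1)) 0
        + Num.min (2 * (del * d%:R ^+ 2 - 1)) 0 >= 0) ->
  one_undistillable (@rho R d eps del).
Proof. exact: main_aux. Qed.
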